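(* Let $\alpha\in[0,1)$, $K_\alpha(x,y)=\dfrac{1}{x^2+2\cos(\pi\alpha)xy+y^2}$ and $Q_\alpha(x,y)=y+x\cos(\pi\alpha)$ for $x,y>0$. For integers $p\ge0$ define $$T_{\alpha,2p}=(2p)!\sum_{k=0}^p(-1)^{p-k}\binom{p+k}{p-k}(4Q_\alpha^2)^kK_\alpha^{p+k+1},\qquad T_{\alpha,2p+1}=2(2p+1)!\,Q_\alpha\sum_{k=0}^p(-1)^{p+1-k}\binom{p+1+k}{p-k}(4Q_\alpha^2)^kK_\alpha^{p+k+2}.$$ Then for every $n\ge0$, $\dfrac{\partial^nK_\alpha}{\partial y^n}=T_{\alpha,n}$. *)

(* Defs.v *)
From Stdlib Require Import Reals.
From Coquelicot Require Import Coquelicot.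
Open Scope R_scope.

Definition Kal (a x y : R) : R := / (x ^ 2 + 2 * cos (PI * a) * x * y + y ^ 2).

Definition Qal (a x y : R) : R := y + x * cos (PI * a).

Definition Teven (a : R) (p : nat) (x y : R) : R :=
  INR (Factorial.fact (2 * p)) *
  sum_f_R0 (fun k => (-1) ^ (p - k) * Binomial.C (p + k) (p - k)
                     * (4 * Qal a x y ^ 2) ^ k * Kal a x y ^ (p + k + 1)) p.

Definition Todd (a : R) (p : nat) (x y : R) : R :=
  2 * INR (Factorial.fact (2 * p + 1)) * Qal a x y *
  sum_f_R0 (fun k => (-1) ^ (p + 1 - k) * Binomial.C (p + 1 + k) (p - k)
                     * (4 * Qal a x y ^ 2) ^ k * Kal a x y ^ (p + k + 2)) p.

Definition Tal (a : R) (n : nat) (x y : R) : R :=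
  if Nat.even n then Teven a (Nat.div2 n) x y else Todd a (Nat.div2 n) x y.

(* Main.v *)
Require Import Defs.
From Stdlib Require Import Reals Lra Lia.
From Coquelicot Require Import Coquelicot.
Open Scope R_scope.

Definition Aco (p k : nat) : R := (-1) ^ (p - k) * Binomial.C (p + k) (p - k).
Definition Bco (p k : nat) : R := (-1) ^ (p + 1 - k) * Binomial.C (p + 1 + k) (p - k).
Definition Ap (p k : nat) : R := if (k <=? p)%nat then Aco p k else 0.
Definition Bp (p k : nat) : R := if (k <=? p)%nat then Bco p k else 0.

Lemma C_eq n k n' k' m : n = n' -> k = k' -> n = (k + m)%nat ->
  Binomial.C n k = INR (Factorial.fact n') / (INR (Factorial.fact k') * INR (Factorial.fact m)).
Proof. intros -> -> E. unfold Binomial.C. rewrite E. replace (k'+m-k')%nat with m by lia. reflexivity. Qed.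

Lemma fact_S n : INR (Factorial.fact (S n)) = INR (S n) * INR (Factorial.fact n).
Proof. change (Factorial.fact (S n)) with (S n * Factorial.fact n)%nat. apply mult_INR. Qed.

Lemma pow_eq (z : R) n n' : n = n' -> z ^ n = z ^ n'.
Proof. intros ->; reflexivity. Qed.

Lemma pow_S' (z : R) n : z ^ S n = z * z ^ n.
Proof. reflexivity. Qed.

Lemma C_n0 n : Binomial.C n 0 = 1.
Proof. unfold Binomial.C. rewrite Nat.sub_0_r. simpl. field. apply INR_fact_neq_0. Qed.

Ltac finish :=
  repeat rewrite fact_S; repeat rewrite pow_S';
  repeat rewrite ?S_INR, ?plus_INR, ?mult_INR; rewrite ?INR_0;
  field; repeat split;
  match goal with
  | |- INR (Factorial.fact _) <> 0 => apply INR_fact_neq_0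
  | |- _ => apply Rgt_not_eq; repeat match goal with |- context [INR ?n] => 
       let h := fresh in assert (h := pos_INR n); revert h; generalize (INR n); intros end; lra
  end.

Lemma I1a j r : let p := S (j + r) in
  4 * INR (S j) * Aco p (S j) - INR (p + j + 1) * Aco p j = INR (2 * p + 1) * Bco p j.
Proof.
intro p; unfold p, Aco, Bco.
rewrite (pow_eq _ (S (j+r) - S j) r) by lia.
rewrite (pow_eq _ (S (j+r) - j) (S r)) by lia.
rewrite (pow_eq _ (S (j+r) + 1 - j) (S (S r))) by lia.
rewrite (C_eq _ _ (S (S (j+j+r))) r (S (S (j+j)))) by lia.
rewrite (C_eq _ _ (S (j+j+r)) (S r) (j+j)) by lia.
rewrite (C_eq _ _ (S (S (j+j+r))) (S r) (S (j+j))) by lia.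
finish.
Qed.

Lemma Aco_pp p : Aco p p = 1.
Proof. unfold Aco. rewrite Nat.sub_diag, C_n0. simpl; ring. Qed.
Lemma Bco_pp p : Bco p p = -1.
Proof. unfold Bco. rewrite Nat.sub_diag, C_n0. rewrite (pow_eq _ _ 1) by lia. simpl; ring. Qed.

Lemma I1 p j : (j <= p)%nat ->
  4 * INR (S j) * Ap p (S j) - INR (p + j + 1) * Aco p j = INR (2 * p + 1) * Bco p j.
Proof.
intros H. destruct (Nat.eq_dec j p) as [->|Hn].
- unfold Ap. rewrite (proj2 (Nat.leb_gt (S p) p)) by lia.
  rewrite Aco_pp, Bco_pp. replace (p+p+1)%nat with (2*p+1)%nat by lia. ring.
- destruct (Nat.le_exists_sub (S j) p) as [r [Hr _]]; [lia|].
  replace p with (S (j + r)) in * by lia.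
  unfold Ap. rewrite (proj2 (Nat.leb_le (S j) (S (j+r)))) by lia.
  apply I1a.
Qed.

Lemma I2 p : (2 + 4 * INR 0) * Bp p 0 = INR (2 * p + 2) * Aco (p + 1) 0.
Proof.
unfold Bp. rewrite (proj2 (Nat.leb_le 0 p)) by lia. unfold Bco, Aco.
rewrite !Nat.sub_0_r, !Nat.add_0_r.
rewrite (C_eq _ _ (S p) p 1) by lia.
rewrite (C_eq _ _ (S p) (S p) 0) by lia.
finish.
Qed.

Lemma I3a k r : let p := S (k + r) in
  (2 + 4 * INR (S k)) * Bco p (S k) - Bco p k * INR (p + k + 2) = INR (2 * p + 2) * Aco (p + 1) (S k).
Proof.
intro p; unfold p, Aco, Bco.
rewrite (pow_eq _ (S (k+r) + 1 - S k) (S r)) by lia.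
rewrite (pow_eq _ (S (k+r) + 1 - k) (S (S r))) by lia.
rewrite (C_eq _ _ (S (S (S (k+k+r)))) r (S (S (S (k+k))))) by lia.
rewrite (C_eq _ _ (S (S (k+k+r))) (S r) (S (k+k))) by lia.
rewrite (C_eq _ _ (S (S (S (k+k+r)))) (S r) (S (S (k+k)))) by lia.
finish.
Qed.

Lemma I3 p k : (k <= p)%nat ->
  (2 + 4 * INR (S k)) * Bp p (S k) - Bco p k * INR (p + k + 2) = INR (2 * p + 2) * Aco (p + 1) (S k).
Proof.
intros H. destruct (Nat.eq_dec k p) as [->|Hn].
- unfold Bp. rewrite (proj2 (Nat.leb_gt (S p) p)) by lia.
  rewrite Bco_pp. replace (S p) with (p+1)%nat by lia. rewrite Aco_pp.
  replace (p+p+2)%nat with (2*p+2)%nat by lia. ring.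
- destruct (Nat.le_exists_sub (S k) p) as [r [Hr _]]; [lia|].
  replace p with (S (k + r)) in * by lia.
  unfold Bp. rewrite (proj2 (Nat.leb_le (S k) (S (k+r)))) by lia.
  apply I3a.
Qed.
Lemma sum_shift (h : nat -> R) n : sum_f_R0 h (S n) = h 0%nat + sum_f_R0 (fun j => h (S j)) n.
Proof.
induction n as [|n IH].
- simpl. ring.
- rewrite tech5, IH. simpl. ring.
Qed.

Lemma sum_drop0 (h : nat -> R) p : h 0%nat = 0 ->
  sum_f_R0 h p = sum_f_R0 (fun j => h (S j)) p - h (S p).
Proof. intros H0. pose proof (sum_shift h p) as E. rewrite tech5, H0 in E. lra. Qed.

Lemma alg_even p (Q K : R) :
  INR (Factorial.fact (2*p)) * sum_f_R0 (fun k =>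
     Aco p k*(2*Q)*(4*INR k*(4*Q^2)^(pred k)*K^(p+k+1))
     - Aco p k*(2*Q)*INR (p+k+1)*(4*Q^2)^k*K^(S(p+k+1))) p
 = 2*INR (Factorial.fact (2*p+1))*Q*sum_f_R0 (fun k => Bco p k*(4*Q^2)^k*K^(p+k+2)) p.
Proof.
rewrite (sum_eq _ (fun k => Ap p k*(2*Q)*(4*INR k*(4*Q^2)^(pred k)*K^(p+k+1))
     - Aco p k*(2*Q)*INR (p+k+1)*(4*Q^2)^k*K^(S(p+k+1))) p).
2: { intros i Hi. unfold Ap. rewrite (proj2 (Nat.leb_le i p) Hi). reflexivity. }
rewrite minus_sum.
rewrite (sum_drop0 (fun k => Ap p k*(2*Q)*(4*INR k*(4*Q^2)^(pred k)*K^(p+k+1)))).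
2: { simpl. ring. }
cbv beta.
replace (Ap p (S p)) with 0 by (unfold Ap; rewrite (proj2 (Nat.leb_gt (S p) p)) by lia; reflexivity).
rewrite !Rmult_0_l, Rminus_0_r.
rewrite <- minus_sum.
rewrite (sum_eq _ (fun j => (Bco p j * (4*Q^2)^j*K^(p+j+2)) * (INR(2*p+1)*(2*Q))) p).
2: { intros j Hj. cbv beta.
     rewrite (pow_eq K (p + S j + 1) (p+j+2)) by lia.
     rewrite (pow_eq K (S (p+j+1)) (p+j+2)) by lia. simpl pred.
     transitivity ((INR (2*p+1) * Bco p j) * (4*Q^2)^j*K^(p+j+2)*(2*Q)); [| ring].
     rewrite <- (I1 p j Hj). ring. }
rewrite <- scal_sum.
replace (INR (Factorial.fact (2*p+1))) with (INR (2*p+1) * INR (Factorial.fact (2*p))).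
2: { replace (2*p+1)%nat with (S (2*p)) by lia. rewrite fact_S. reflexivity. }
ring.
Qed.

Lemma alg_odd p (Q K : R) :
  INR (Factorial.fact (2*p+1)) * (2 * sum_f_R0 (fun k => Bco p k*(4*Q^2)^k*K^(p+k+2)) p
   + 2*Q*sum_f_R0 (fun k =>
     Bco p k*(2*Q)*(4*INR k*(4*Q^2)^(pred k)*K^(p+k+2))
     - Bco p k*(2*Q)*INR (p+k+2)*(4*Q^2)^k*K^(S(p+k+2))) p)
 = INR (Factorial.fact (2*(p+1))) * sum_f_R0 (fun k => Aco (p+1) k*(4*Q^2)^k*K^(p+1+k+1)) (p+1).
Proof.
set (u1 := fun k => (2+4*INR k)*Bp p k*(4*Q^2)^k*K^(p+k+2)).
set (g := fun j => match j with O => 0 | S k => Bco p k*INR(p+k+2)*(4*Q^2)^(S k)*K^(p+k+3) end).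
rewrite !scal_sum, <- plus_sum.
rewrite (sum_eq _ (fun k => u1 k - g (S k)) p).
2: { intros k Hk. unfold u1, g, Bp. rewrite (proj2 (Nat.leb_le k p) Hk).
     rewrite (pow_eq K (S (p+k+2)) (p+k+3)) by lia.
     destruct k as [|k].
     - simpl pred. simpl INR. simpl pow. ring.
     - simpl pred. rewrite !pow_S'. ring. }
rewrite minus_sum.
assert (E1 : sum_f_R0 u1 p = sum_f_R0 u1 (S p)).
{ rewrite tech5. replace (u1 (S p)) with 0. ring. unfold u1, Bp. rewrite (proj2 (Nat.leb_gt (S p) p)) by lia. ring. }
assert (E2 : sum_f_R0 (fun k => g (S k)) p = sum_f_R0 g (S p)).
{ rewrite sum_shift. simpl. ring. }
rewrite E1, E2, <- minus_sum.
rewrite (sum_eq _ (fun j => (Aco (p+1) j*(4*Q^2)^j*K^(p+1+j+1)) * INR (2*p+2)) (S p)).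
2: { intros j Hj. unfold u1, g. destruct j as [|k].
     - transitivity (((2 + 4 * INR 0) * Bp p 0) * (4*Q^2)^0 * K^(p+0+2)); [ring|].
       rewrite I2. rewrite (pow_eq K (p+0+2) (p+1+0+1)) by lia. ring.
     - transitivity (((2 + 4 * INR (S k)) * Bp p (S k) - Bco p k * INR (p+k+2)) * (4*Q^2)^(S k) * K^(p+k+3)).
       + rewrite (pow_eq K (p + S k + 2) (p+k+3)) by lia. ring.
       + rewrite (I3 p k) by lia. rewrite (pow_eq K (p + 1 + S k + 1) (p+k+3)) by lia. ring. }
rewrite <- scal_sum.
replace (INR (Factorial.fact (2*(p+1)))) with (INR (2*p+2) * INR (Factorial.fact (2*p+1))).
2: { replace (2*(p+1))%nat with (S (2*p+1)) by lia. rewrite fact_S. f_equal. f_equal. lia. }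
rewrite <- scal_sum. replace (S p) with (p+1)%nat by lia.
ring.
Qed.
Lemma dterm a x t c k m : x^2+2*cos(PI*a)*x*t+t^2 <> 0 ->
  is_derive (fun s => c * (4*Qal a x s^2)^k * Kal a x s^m) t
   (c*(2*Qal a x t)*(4*INR k*(4*Qal a x t^2)^(pred k)*Kal a x t^m)
    - c*(2*Qal a x t)*INR m*(4*Qal a x t^2)^k*Kal a x t^(S m)).
Proof.
intros H. unfold Kal, Qal. auto_derive.
- replace (x * (x * 1) + 2 * cos (PI * a) * x * t + t * (t * 1)) with (x^2+2*cos(PI*a)*x*t+t^2) by ring. exact H.
- replace (x * (x * 1) + 2 * cos (PI * a) * x * t + t * (t * 1)) with (x^2+2*cos(PI*a)*x*t+t^2) by ring.
  set (D := x^2+2*cos(PI*a)*x*t+t^2) in *.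
  set (X := 4 * ((t + x * cos (PI * a)) * ((t + x * cos (PI * a)) * 1))).
  replace (4 * (t + x * cos (PI * a)) ^ 2) with X by (unfold X; ring).
  set (Xp := X ^ Init.Nat.pred k). set (Xk := X ^ k).
  destruct m as [|m].
  + simpl. ring.
  + simpl Init.Nat.pred. simpl pow at 2. rewrite S_INR.
    change ((/D)^S (S m)) with (/D*(/D*(/D)^m)). change ((/D)^S m) with (/D*(/D)^m).
    set (Km := (/D)^m). field. exact H.
Qed.

Lemma is_derive_sum (g : nat -> R -> R) (g' : nat -> R) t n :
  (forall k, is_derive (g k) t (g' k)) ->
  is_derive (fun s => sum_f_R0 (fun k => g k s) n) t (sum_f_R0 g' n).
Proof.
intros H. induction n as [|n IH].
- simpl. apply H.
- simpl. apply (is_derive_plus (fun s => sum_f_R0 (fun k => g k s) n) (g (S n))); auto.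
Qed.

Lemma dQ a x t : is_derive (Qal a x) t 1.
Proof. unfold Qal. auto_derive; auto; ring. Qed.

Lemma dTeven a x t p : x^2+2*cos(PI*a)*x*t+t^2 <> 0 ->
  is_derive (Teven a p x) t (Todd a p x t).
Proof.
intros H.
assert (D : is_derive (fun s => INR (Factorial.fact (2*p)) * sum_f_R0 (fun k => Aco p k * (4*Qal a x s^2)^k*Kal a x s^(p+k+1)) p) t
   (INR (Factorial.fact (2*p)) * sum_f_R0 (fun k =>
     Aco p k*(2*Qal a x t)*(4*INR k*(4*Qal a x t^2)^(pred k)*Kal a x t^(p+k+1))
     - Aco p k*(2*Qal a x t)*INR (p+k+1)*(4*Qal a x t^2)^k*Kal a x t^(S(p+k+1))) p)).
{ apply is_derive_scal.
  apply (is_derive_sum (fun k s => Aco p k * (4*Qal a x s^2)^k*Kal a x s^(p+k+1))).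
  intro k. apply dterm; auto. }
rewrite alg_even in D. exact D.
Qed.

Lemma dTodd a x t p : x^2+2*cos(PI*a)*x*t+t^2 <> 0 ->
  is_derive (Todd a p x) t (Teven a (p+1) x t).
Proof.
intros H.
assert (D := is_derive_mult (fun s => 2 * INR (Factorial.fact (2*p+1)) * Qal a x s)
          (fun s => sum_f_R0 (fun k => Bco p k * (4*Qal a x s^2)^k*Kal a x s^(p+k+2)) p) t
          (2 * INR (Factorial.fact (2*p+1)) * 1)
          (sum_f_R0 (fun k =>
     Bco p k*(2*Qal a x t)*(4*INR k*(4*Qal a x t^2)^(pred k)*Kal a x t^(p+k+2))
     - Bco p k*(2*Qal a x t)*INR (p+k+2)*(4*Qal a x t^2)^k*Kal a x t^(S(p+k+2))) p)).
specialize (D (is_derive_scal _ _ _ _ (dQ a x t))).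
specialize (D (is_derive_sum (fun k s => Bco p k * (4*Qal a x s^2)^k*Kal a x s^(p+k+2)) _ t p
               (fun k => dterm a x t (Bco p k) k (p+k+2) H))).
specialize (D Rmult_comm).
unfold Teven. rewrite <- alg_odd.
change (plus ?u ?v) with (Rplus u v) in D.
repeat change (mult ?u ?v) with (Rmult u v) in D.
match goal with |- is_derive _ _ ?E => match type of D with is_derive _ _ ?v =>
  replace E with v; [ exact D | ring ] end end.
Qed.

Lemma Tal_even a p x y : Tal a (2*p) x y = Teven a p x y.
Proof.
unfold Tal. replace (Nat.even (2*p)) with true.
- rewrite Nat.div2_double. reflexivity.
- symmetry. apply Nat.even_spec. exists p. reflexivity.
Qed.

Lemma Tal_odd a p x y : Tal a (S (2*p)) x y = Todd a p x y.
Proof.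
unfold Tal. replace (Nat.even (S (2*p))) with false.
- rewrite Nat.div2_succ_double. reflexivity.
- rewrite <- Nat.negb_odd. replace (Nat.odd (S (2*p))) with true. reflexivity.
  symmetry. apply Nat.odd_spec. exists p. lia.
Qed.

Lemma dTal a x t n : x^2+2*cos(PI*a)*x*t+t^2 <> 0 ->
  is_derive (Tal a n x) t (Tal a (S n) x t).
Proof.
intros H. destruct (Nat.Even_or_Odd n) as [[p ->]|[p ->]].
- rewrite Tal_odd. eapply is_derive_ext; [| apply (dTeven a x t p H)].
  intro s; symmetry; apply Tal_even.
- replace (S (2*p+1)) with (2*(p+1))%nat by lia. rewrite Tal_even.
  replace (2*p+1)%nat with (S (2*p)) by lia.
  eapply is_derive_ext; [| apply (dTodd a x t p H)].
  intro s; symmetry; apply Tal_odd.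
Qed.

Lemma Dpos a x t : 0 <= a -> a < 1 -> 0 < x -> 0 < t -> x^2+2*cos(PI*a)*x*t+t^2 <> 0.
Proof.
intros ha0 ha1 hx ht.
assert (hc : -1 < cos (PI * a)).
{ rewrite <- cos_PI. destruct (Req_dec a 0) as [->|Ha].
  - rewrite Rmult_0_r, cos_0, cos_PI. lra.
  - pose proof PI_RGT_0. apply cos_decreasing_1; try nra. }
assert (0 < (1 + cos (PI*a)) * x * t) by (apply Rmult_lt_0_compat; [apply Rmult_lt_0_compat|]; lra).
replace (x^2+2*cos(PI*a)*x*t+t^2) with ((x-t)^2 + 2*((1 + cos (PI*a)) * x * t)) by ring.
assert (0 <= (x-t)^2) by apply pow2_ge_0. apply Rgt_not_eq. lra.
Qed.

Theorem lemma1 (a : R) (ha0 : 0 <= a) (ha1 : a < 1) (x y : R) (hx : 0 < x) (hy : 0 < y)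
  (n : nat) :
  ex_derive_n (fun t => Kal a x t) n y /\
  Derive_n (fun t => Kal a x t) n y = Tal a n x y.
Proof.
revert y hy. induction n as [|n IH]; intros y hy.
- split; [exact I|]. simpl. rewrite Tal_even with (p := 0%nat). unfold Teven. simpl.
  unfold Binomial.C. simpl. field.
- assert (L : locally y (fun s => Tal a n x s = Derive_n (fun t => Kal a x t) n s)).
  { exists (mkposreal y hy). intros s Hs.
    assert (0 < s).
    { unfold ball in Hs; simpl in Hs; unfold AbsRing_ball, abs, minus, plus, opp in Hs; simpl in Hs.
      apply Rabs_def2 in Hs. lra. }
    symmetry. apply (IH s H). }
  assert (D := is_derive_ext_loc _ _ y _ L (dTal a x y n (Dpos a x y ha0 ha1 hx hy))).
  split.
  + simpl. exists (Tal a (S n) x y). exact D.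
  + simpl. apply is_derive_unique. exact D.
Qed.
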